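(* Let $T=[(\texttt{@}\texttt{\$},1),(\sigma_1,p_1),\dots,(\sigma_{k-1},p_{k-1})]$ be a sequence of pairs with $k\ge2$, each $\sigma_d$ ($d\ge1$) a non-empty string over $\Sigma$ and each $p_d$ a non-negative integer. For $1\le d\le k-2$ write $a_d=\sigma_d[1]$ and $c_d=\sigma_d[|\sigma_d|]$. Then $T=\mathcal{F}(s)$ for some $s\in\Sigma^*$ if and only if: (1) for each $1\le d\le k-2$: $p_d\ge1$ and $|\sigma_d|-p_d\ge1$, the front $\sigma_d[1..p_d]$ is a single run of $a_d$, and the back $\sigma_d[p_d+1..|\sigma_d|]$ is a single run of $c_d$; (2) $p_{k-1}=0$ and $\sigma_{k-1}$ is either a single run $a^m$ or two adjacent runs $a^\ell c^b$ with $a\ne c$; (3) if $k\ge3$: for $1\le d\le k-3$, $a_{d+1}\ne a_d$ and $c_{d+1}\ne c_d$; and the first character of $\sigma_{k-1}$ differs from $a_{k-2}$ and the last character of $\sigma_{k-1}$ differs from $c_{k-2}$. (When $k=2$ only (1) and (2) apply.) Moreover, $\mathcal{F}(\mathcal{F}^{-1}(T))=T$ for every $T$ satisfying these conditions.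
   Context: Let $\Sigma$ be an alphabet and $\texttt{@},\texttt{\$}$ two distinct symbols not in $\Sigma$. For $s\in\Sigma^*$ with $|s|=n$ let $\hat s=\texttt{@}\,s\,\texttt{\$}$ (positions $1,\dots,n+2$); $\hat s[i..j)$ is the substring at positions $i,\dots,j-1$. A single run of $a$ is a string $a^m$, $m\ge1$. The leading (trailing) run of a non-empty string is its longest prefix (suffix) consisting of one repeated symbol. The Flashback decomposition $\mathcal{F}(s)$ is the sequence of tokens $(\sigma,p)$ produced as follows, starting from active span $[lo,hi)=[1,n+3)$: if $lo\ge hi$, stop. Let $\ell$ be the leading-run length of $\hat s[lo..hi)$. If $\ell=hi-lo$, append $(\hat s[lo..hi),0)$ and stop. Otherwise let $\hat s[r..hi)$ be the trailing run of $\hat s[lo..hi)$ and $\sigma=\hat s[lo..lo+\ell)\cdot\hat s[r..hi)$; if $lo+\ell\ge r$, append $(\sigma,0)$ and stop; otherwise append $(\sigma,\ell)$ and repeat with $[lo+\ell,r)$. For $T=[(\sigma_0,p_0),\dots,(\sigma_{k-1},p_{k-1})]$ define $N_{k-1}=\sigma_{k-1}$ and $N_i=\sigma_i[1..p_i]\cdot N_{i+1}\cdot\sigma_i[p_i+1..|\sigma_i|]$ for $i<k-1$; $\mathcal{F}^{-1}(T)$ is $N_0$ with its first and last characters removed. *)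

(* Defs.v *)
From mathcomp Require Import all_boot.
Set Implicit Arguments. Unset Strict Implicit. Unset Printing Implicit Defensive.

(* Extended alphabet Sigma ∪ {@, $}, encoded as option (option Sigma):
   @ = None, $ = Some None, a ∈ Sigma = Some (Some a). *)
Definition ext (S : Type) := option (option S).
Definition At {S : Type} : ext S := None.
Definition Dol {S : Type} : ext S := Some None.
Definition Ch {S : Type} (a : S) : ext S := Some (Some a).

Section Flashback.
Variable X : eqType.

Definition lead_run (w : seq X) : nat :=
  if w is x :: _ then find (predC1 x) w else 0.
Definition trail_run (w : seq X) : nat := lead_run (rev w).

(* One Flashback pass on the active substring w = hat s[lo..hi).
   0-indexed: ell = lead_run w, r = size w - trail_run w;
   sigma = w[0..ell) ++ w[r..size w); the next active span is w[ell..r).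
   Recursion is guarded by a fuel argument, which is always sufficient when
   fuel >= size w (each step strictly shrinks the active span). *)
Fixpoint flashback_aux (fuel : nat) (w : seq X) : seq (seq X * nat) :=
  match fuel with
  | 0 => [::]
  | fuel'.+1 =>
    if w is [::] then [::] else
    let ell := lead_run w in
    if ell == size w then [:: (w, 0)] else
    let r := size w - trail_run w in
    let sigma := take ell w ++ drop r w in
    if r <= ell then [:: (sigma, 0)]
    else (sigma, ell) :: flashback_aux fuel' (drop ell (take r w))
  end.

(* inverse: N_{k-1} = sigma_{k-1}, N_i = sigma_i[1..p_i] N_{i+1} sigma_i[p_i+1..] *)
Definition flashback_N (T : seq (seq X * nat)) : seq X :=
  match T with
  | [::] => [::]
  | _ => foldr (fun t N => take t.2 t.1 ++ N ++ drop t.2 t.1) [::] T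
  end.

Definition strip (w : seq X) : seq X := take (size w - 2) (drop 1 w).

End Flashback.

Section Hat.
Variable S : eqType.
Definition hat (s : seq S) : seq (ext S) := At :: rcons (map Ch s) Dol.

Definition flashback (s : seq S) : seq (seq (ext S) * nat) :=
  flashback_aux (size (hat s)).+1 (hat s).

Definition flashback_inv (T : seq (seq (ext S) * nat)) : seq (ext S) :=
  strip (flashback_N T).

Definition run_of (oa : option S) (w : seq S) : bool :=
  (w != [::]) && all (fun x => Some x == oa) w.

Definition ofirst (w : seq S) : option S := ohead w.
Definition olast (w : seq S) : option S := ohead (rev w).
End Hat.

(* Main.v *)
Require Import Defs.
From mathcomp Require Import all_boot zify.
Set Implicit Arguments. Unset Strict Implicit. Unset Printing Implicit Defensive.

Section Core.
Variable X : eqType.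
Implicit Types (w u v : seq X) (a c : X).

Definition NN (ts : seq (seq X * nat)) : seq X :=
  foldr (fun t N => take t.2 t.1 ++ N ++ drop t.2 t.1) [::] ts.
Definition runX (o : option X) w := all (fun x => Some x == o) w.
Definition mid_ok (t : seq X * nat) :=
  [&& 0 < t.2 < size t.1, runX (ohead t.1) (take t.2 t.1)
    & runX (ohead (rev t.1)) (drop t.2 t.1)].
Definition end_ok (t : seq X * nat) : Prop :=
  t.2 = 0 /\ exists a c l b, [/\ 0 < l, t.1 = nseq l a ++ nseq b c & (b == 0) || (a != c)].
Fixpoint validR (ts : seq (seq X * nat)) : Prop :=
  match ts with
  | [::] => False
  | t :: ts' => match ts' with
     | [::] => end_ok t
     | t' :: _ => [/\ mid_ok t, ohead t'.1 != ohead t.1,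
                      ohead (rev t'.1) != ohead (rev t.1) & validR ts']
     end
  end.

Lemma ohead_cat w v : w != [::] -> ohead (w ++ v) = ohead w.
Proof. by case: w. Qed.
Lemma olast_cat w v : v != [::] -> ohead (rev (w ++ v)) = ohead (rev v).
Proof. by move=> hv; rewrite rev_cat ohead_cat // -size_eq0 size_rev size_eq0. Qed.
Lemma olast_drop p w : p < size w -> ohead (rev (drop p w)) = ohead (rev w).
Proof.
move=> hp; rewrite -{2}(cat_take_drop p w) olast_cat //.
by rewrite -size_eq0 size_drop; apply/eqP => h; move: hp; rewrite -subn_gt0 h.
Qed.
Lemma ohead_take p w : 0 < p -> ohead (take p w) = ohead w.
Proof. by case: p => // p; case: w. Qed.

Lemma find_nseq_cat a l u : find (predC1 a) (nseq l a ++ u) = l + find (predC1 a) u.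
Proof. by rewrite find_cat has_nseq /= eqxx andbF size_nseq. Qed.

Lemma lead_nseq a l u : 0 < l -> ohead u != Some a -> lead_run (nseq l a ++ u) = l.
Proof.
case: l => // l _ hu.
change (find (predC1 a) (nseq l.+1 a ++ u) = l.+1); rewrite find_nseq_cat.
by case: u hu => [|y u] /= hu; rewrite ?addn0 // ifT ?addn0 //.
Qed.

Lemma trail_nseq c l v : 0 < l -> ohead (rev v) != Some c -> trail_run (v ++ nseq l c) = l.
Proof. by move=> l0 hv; rewrite /trail_run rev_cat rev_nseq lead_nseq. Qed.

Lemma lead_dec a w : w = nseq (find (predC1 a) w) a ++ drop (find (predC1 a) w) w /\
   ohead (drop (find (predC1 a) w) w) != Some a.
Proof.
elim: w => [|x w [IH1 IH2]] //=.
case: eqP => [->|hx] /=; last by split => //; apply/eqP => -[].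
by split => //; congr (_ :: _).
Qed.

Lemma lead_dec2 w : w != [::] -> exists a u,
  [/\ 0 < lead_run w, w = nseq (lead_run w) a ++ u & ohead u != Some a].
Proof.
case: w => // x w _; have [h1 h2] := lead_dec x (x :: w).
exists x, (drop (find (predC1 x) (x :: w)) (x :: w)).
change (lead_run (x :: w)) with (find (predC1 x) (x :: w)); split => //.
by rewrite /= eqxx.
Qed.

Lemma trail_dec w : w != [::] -> exists c v,
  [/\ 0 < trail_run w, w = v ++ nseq (trail_run w) c & ohead (rev v) != Some c].
Proof.
move=> wn; have rn : rev w != [::] by rewrite -size_eq0 size_rev size_eq0.
have [c [u [h1 h2 h3]]] := lead_dec2 rn.
exists c, (rev u); rewrite revK; split => //.
by have := congr1 rev h2; rewrite revK rev_cat rev_nseq => E; rewrite {1}E.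
Qed.

Lemma fa_step f w : w != [::] -> flashback_aux f.+1 w =
  (if lead_run w == size w then [:: (w, 0)] else
   if size w - trail_run w <= lead_run w then
     [:: (take (lead_run w) w ++ drop (size w - trail_run w) w, 0)]
   else (take (lead_run w) w ++ drop (size w - trail_run w) w, lead_run w)
        :: flashback_aux f (drop (lead_run w) (take (size w - trail_run w) w))).
Proof. by case: w. Qed.

Lemma headNN t ts : validR (t :: ts) ->
  [/\ ohead (NN (t :: ts)) = ohead t.1, ohead (rev (NN (t :: ts))) = ohead (rev t.1),
      NN (t :: ts) != [::] & t.1 != [::]].
Proof.
case: t => w p; case: ts => [|t' ts] /=.
  move=> [/= -> [a [c [l [b [l0 hw _]]]]]]; rewrite take0 drop0 /=.
  have wn : w != [::] by rewrite hw; case: (l) l0.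
  by split.
case=> /andP [/andP [p0 pw] _] _ _ _.
have wn : w != [::] by apply/eqP => E; rewrite E in pw.
have tn : take p w != [::] by rewrite -size_eq0 size_take; case: ifP => _; rewrite -lt0n // lt0n size_eq0.
have dn : drop p w != [::] by rewrite -size_eq0 size_drop subn_eq0 -ltnNge.
split => //; first by rewrite ohead_cat // ohead_take.
  by rewrite catA olast_cat // olast_drop.
by case: (take p w) tn.
Qed.


Lemma runX_nseq a w : runX (Some a) w -> w = nseq (size w) a.
Proof.
move=> h; apply/all_pred1P; apply: sub_all h => x /=.
by move/eqP => [->].
Qed.

Lemma runX_nseqI a l : runX (Some a) (nseq l a).
Proof. by rewrite /runX all_nseq eqxx orbT. Qed.

Lemma coreA f w : w != [::] -> size w < f ->
  validR (flashback_aux f w) /\ NN (flashback_aux f w) = w.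
Proof.
elim: f w => [|f IH] w wn hs //.
have [a [u [l0 hw hu]]] := lead_dec2 wn.
rewrite fa_step //.
case: eqP => hl.
  have u0 : u = [::].
    by apply/eqP; rewrite -size_eq0; move: (congr1 size hw); rewrite size_cat size_nseq -hl => /eqP; rewrite -{1}[lead_run w]addn0 eqn_add2l eq_sym.
  rewrite /= take0 drop0; split => //; split => //.
  have hw0 : w = nseq (lead_run w) a by rewrite u0 cats0 in hw.
  by exists a; exists a; exists (lead_run w); exists 0; rewrite /= cats0; split.
have un : u != [::].
  by apply/eqP => u0; apply: hl; rewrite {2}hw u0 cats0 size_nseq.
have [c [v [m0 hv hc]]] := trail_dec wn.
set l := lead_run w in l0 hw hl *.
set m := trail_run w in m0 hv *.
have hr : size w - m = size v by rewrite {1}hv size_cat size_nseq addnK.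
rewrite hr.
have lv : l <= size v.
  rewrite leqNgt; apply/negP => vl.
  case: u hw hu un => // y u hw hu _.
  have e1 := congr1 (nth a ^~ (size v)) hw.
  have e2 := congr1 (nth a ^~ (size v)) hv.
  have e3 := congr1 (nth a ^~ l) hw.
  have e4 := congr1 (nth a ^~ l) hv.
  move: e1 e2 e3 e4 => /=.
  have vl' : (l < size v) = false by rewrite ltnNge ltnW.
  have lw : l < size w by rewrite hw size_cat size_nseq addnS ltnS leq_addr.
  have lm : l - size v < m by move: (congr1 size hv); rewrite size_cat size_nseq; lia.
  rewrite !nth_cat !size_nseq vl vl' !ltnn !subnn !nth_nseq vl m0 lm ?ltnn ?subnn /=.
  move=> -> <- -> e4; move: hu; rewrite e4 /=.
  by rewrite eqxx.
case: leqP => hvl.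
  have evl : size v = l by apply/eqP; rewrite eqn_leq hvl lv.
  have ev : v = nseq l a.
    by have := congr1 (take l) hw; rewrite take_size_cat ?size_nseq // {1}hv take_size_cat // => ->.
  have eu : u = nseq m c.
    by have := congr1 (drop l) hw; rewrite drop_size_cat ?size_nseq // {1}hv drop_size_cat // => ->.
  rewrite evl cat_take_drop /= take0 drop0; split => //; split => //.
  exists a; exists c; exists l; exists m; split => //; first by rewrite {1}hv ev.
  apply/orP; right; apply: contra hu => /eqP ->; rewrite eu.
  by case: (m) m0.
set mid := drop l v.
have ev : v = nseq l a ++ mid.
  rewrite -[v](cat_take_drop l); congr (_ ++ _).
  have := congr1 (take l) hw; rewrite take_size_cat ?size_nseq //.
  by rewrite {1}hv take_cat ltnNge leqNgt hvl /= => <-.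
have hw' : w = nseq l a ++ (mid ++ nseq m c) by rewrite {1}hv ev catA.
have mn : mid != [::].
  by rewrite -size_eq0 size_drop subn_eq0 -ltnNge.
have hum : u = mid ++ nseq m c.
  by have := congr1 (drop l) hw; rewrite drop_size_cat ?size_nseq // {1}hw' drop_size_cat ?size_nseq.
have hmid : ohead mid != Some a by rewrite hum ohead_cat in hu.
have hmidc : ohead (rev mid) != Some c by rewrite ev olast_cat in hc.
have -> : take l w = nseq l a by rewrite hw' take_size_cat ?size_nseq.
have -> : drop (size v) w = nseq m c by rewrite {1}hv drop_size_cat.
have -> : drop l (take (size v) w) = mid by rewrite {1}hv take_size_cat.
have hsm : size mid < f.
  move: hs; rewrite hw' !size_cat !size_nseq; lia.
have [IH1 IH2] := IH mid mn hsm.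
split; last by rewrite /= IH2 take_size_cat ?size_nseq // drop_size_cat ?size_nseq // -catA -hw'.
move: IH1 IH2; case: (flashback_aux f mid) => // t' rest vr hN.
have [h1 h2 _ _] := headNN vr.
rewrite /=; split => //.
- rewrite /mid_ok /= size_cat !size_nseq (_ : 0 < l < l + m) /=; last by apply/andP; split => //; lia.
  rewrite ohead_cat; last by case: (l) l0.
  rewrite olast_cat; last by case: (m) m0.
  rewrite take_size_cat ?size_nseq // drop_size_cat ?size_nseq //.
  case: (l) l0 => // l1 _; case: (m) m0 => // m1 _.
  by rewrite rev_nseq; apply/andP; split; apply: runX_nseqI.
- rewrite -h1 hN ohead_cat; last by case: (l) l0.
  by case: (l) l0 => // l1 _ /=; rewrite eq_sym.
- rewrite -h2 hN olast_cat; last by case: (m) m0.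
  by case: (m) m0 hmidc => // m1 _; rewrite rev_nseq.
Qed.

Lemma coreB ts : validR ts -> forall f, size (NN ts) < f -> flashback_aux f (NN ts) = ts.
Proof.
elim: ts => [|t ts IH] //; case: ts IH => [|t' ts'] IH.
  case: t => w p [/= -> [a [c [l [b [l0 -> hb]]]]]] [|f] //.
  rewrite take0 drop0 cat0s => _.
  have wn : nseq l a ++ nseq b c != [::] by case: (l) l0.
  rewrite fa_step // lead_nseq //; last first.
    by case: (b) hb => //= b' /eqP ne; apply/eqP => -[e]; apply: ne.
  rewrite size_cat size_nseq.
  case: (b) hb => [|b'] hb; first by rewrite addn0 eqxx.
  rewrite size_nseq ifF; last by apply/eqP; lia.
  rewrite trail_nseq //; last first.
    by case: (l) l0 => // l1 _; rewrite rev_nseq /=; apply/eqP => -[e]; move: hb; rewrite e eqxx.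
  by rewrite addnK leqnn cat_take_drop.
case: t => w p [hm h1 h2 hv] [|f] //.
have [e1 e2 nn _] := headNN hv.
move/and3P: hm => [/andP [p0 pw] r1 r2]; rewrite /= in p0 pw r1 r2 h1 h2.
have wn : w != [::] by apply/eqP => E; rewrite E in pw.
case ha : (ohead w) r1 h1 => [a|]; last by case: (w) wn ha.
case hc : (ohead (rev w)) r2 h2 => [c|]; last by move: wn; rewrite -size_eq0 -size_rev size_eq0; case: (rev w) hc.
move=> r2 h2 r1 h1.
set N' := NN (t' :: ts') in e1 e2 nn IH *.
have ht : take p w = nseq p a by rewrite (runX_nseq r1) size_take pw.
set q := size w - p.
have hd : drop p w = nseq q c by rewrite (runX_nseq r2) size_drop.
rewrite (_ : NN ((w, p) :: t' :: ts') = take p w ++ N' ++ drop p w) // ht hd => hs.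
clearbody N'.
have q0 : 0 < q by rewrite subn_gt0.
have hN : N' != [::] by [].
rewrite fa_step; last by case: (p) p0.
rewrite lead_nseq //; last by rewrite ohead_cat // e1.
have sz : size N' > 0 by rewrite lt0n size_eq0.
rewrite !size_cat !size_nseq ifF; last by apply/eqP; lia.
rewrite catA trail_nseq //; last by rewrite olast_cat // e2.
rewrite ifF; last by apply/negbTE; rewrite -ltnNge; lia.
rewrite -catA take_size_cat ?size_nseq //.
rewrite (_ : p + (size N' + q) - q = size (nseq p a ++ N')); last by rewrite size_cat size_nseq; lia.
rewrite catA drop_size_cat // take_size_cat // drop_size_cat ?size_nseq //.
rewrite -ht -hd cat_take_drop IH //.
move: hs; rewrite !size_cat !size_nseq; lia.
Qed.

End Core.
Lemma validR_iota (X : eqType) (g : nat -> seq X * nat) m n :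
  validR [seq g d | d <- iota m n.+1] <->
  (forall d, m <= d < m + n -> [/\ mid_ok (g d), ohead (g d.+1).1 != ohead (g d).1
                                 & ohead (rev (g d.+1).1) != ohead (rev (g d).1)]) /\
  end_ok (g (m + n)).
Proof.
elim: n m => [|n IH] m.
  by rewrite addn0 /=; split => [h|[_ h]] //; split => // d; lia.
rewrite [iota _ _]/= [map _ _]/= -/(map g (iota m.+1 n.+1)).
have -> : validR (g m :: [seq g d | d <- iota m.+1 n.+1]) <->
   ([/\ mid_ok (g m), ohead (g m.+1).1 != ohead (g m).1
      & ohead (rev (g m.+1).1) != ohead (rev (g m).1)] /\ validR [seq g d | d <- iota m.+1 n.+1]).
  by rewrite [iota m.+1 _]/= /=; split => [[]|[[]]].
rewrite IH addSnnS; split.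
  move=> [h0 [h1 h2]]; split => // d /andP [md dn].
  case: (ltngtP m d) md => // [lt _|<- _]; last by [].
  by apply: h1; rewrite lt dn.
move=> [h1 h2]; split; first by apply: h1; rewrite leqnn /=; lia.
by split => // d /andP [md dn]; apply: h1; apply/andP; split; lia.
Qed.

Section Tr.
Variable S : eqType.

Lemma Ch_inj : injective (@Ch S). Proof. by move=> x y []. Qed.

Lemma omapCh_eq (x y : option S) : (omap (@Ch S) x == omap (@Ch S) y) = (x == y).
Proof.
case: x y => [x|] [y|] //=; apply/eqP/eqP => [[e]|[->]] //.
Qed.

Lemma ohead_mapCh (w : seq S) : ohead (map (@Ch S) w) = omap (@Ch S) (ohead w).
Proof. by case: w. Qed.
Lemma olast_mapCh (w : seq S) : ohead (rev (map (@Ch S) w)) = omap (@Ch S) (ohead (rev w)).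
Proof. by rewrite -map_rev ohead_mapCh. Qed.

Lemma runX_map (o : option S) u : runX (omap (@Ch S) o) (map (@Ch S) u) = all (fun x => Some x == o) u.
Proof.
rewrite /runX all_map; apply: eq_all => x /=.
by rewrite -omapCh_eq.
Qed.

Lemma mid_tr (w : seq S) q : w != [::] ->
  (mid_ok (map (@Ch S) w, q) <->
   [/\ 1 <= q, 1 <= size w - q, run_of (ofirst w) (take q w) & run_of (olast w) (drop q w)]).
Proof.
move=> wn; rewrite /mid_ok /= size_map ohead_mapCh olast_mapCh -map_take -map_drop !runX_map.
rewrite /run_of /ofirst /olast subn_gt0.
split.
  move=> /and3P [/andP [q0 qw] r1 r2]; split => //; rewrite ?r1 ?r2 andbT.
    by rewrite -size_eq0 size_take; case: ifP => _; rewrite -lt0n // lt0n size_eq0.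
  by rewrite -size_eq0 size_drop subn_eq0 -ltnNge.
by move=> [q0 qw /andP [_ r1] /andP [_ r2]]; rewrite q0 qw r1 r2.
Qed.

Lemma neq_tr (x y : seq S) :
  (ohead (map (@Ch S) x) != ohead (map (@Ch S) y)) = (ofirst x != ofirst y) /\
  (ohead (rev (map (@Ch S) x)) != ohead (rev (map (@Ch S) y))) = (olast x != olast y).
Proof. by rewrite !ohead_mapCh !olast_mapCh !omapCh_eq. Qed.

Lemma end_tr (w : seq S) q :
  end_ok (map (@Ch S) w, q) <->
  (q = 0 /\
     ((exists a : S, run_of (Some a) w) \/
      (exists (a c : S) (l b : nat), [/\ 1 <= l, 1 <= b, a != c
                                     & w = nseq l a ++ nseq b c]))).
Proof.
rewrite /end_ok /=; split.
  move=> [-> [a' [c' [l [b [l0 hw hb]]]]]]; split => //.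
  have : a' \in map (@Ch S) w by rewrite hw mem_cat mem_nseq l0 eqxx.
  case/mapP => a _ ea; subst a'.
  case: (posnP b) => [b0|b0].
    left; exists a; move: hw; rewrite b0 cats0 -map_nseq => /(inj_map (@Ch_inj)) ->.
    by rewrite /run_of all_nseq eqxx orbT andbT; case: (l) l0.
  have : c' \in map (@Ch S) w by rewrite hw mem_cat !mem_nseq b0 eqxx orbT.
  case/mapP => c _ ec; subst c'.
  right; exists a; exists c; exists l; exists b; split => //.
    by move: hb; rewrite (inj_eq (@Ch_inj)); case: (b) b0.
  by move: hw; rewrite -!map_nseq -map_cat => /(inj_map (@Ch_inj)).
move=> [-> [[a /andP [wn ra]]|[a [c [l [b [l0 b0 ac ->]]]]]]]; split => //.
  exists (Ch a); exists (Ch a); exists (size w); exists 0; split.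
  - by rewrite lt0n size_eq0.
  - rewrite cats0 -map_nseq; congr (map _ _); apply/all_pred1P.
    by apply: sub_all ra => x /= /eqP [->].
  - by [].
exists (Ch a); exists (Ch c); exists l; exists b; split => //.
  by rewrite map_cat !map_nseq.
by rewrite (inj_eq (@Ch_inj)) ac orbT.
Qed.

Lemma NN_map (sig : nat -> seq S) (p : nat -> nat) l :
  NN [seq (map (@Ch S) (sig d), p d) | d <- l] = map (@Ch S) (NN [seq (sig d, p d) | d <- l]).
Proof.
elim: l => [|d l IH] //=.
by rewrite IH !map_cat map_take map_drop.
Qed.

Lemma hat_step (s : seq S) f : s != [::] ->
  flashback_aux f.+1 (hat s) = ([:: At; Dol], 1) :: flashback_aux f (map (@Ch S) s).
Proof.
move=> sn.
have e1 : hat s = nseq 1 At ++ (map (@Ch S) s ++ [:: Dol]) by rewrite /hat /= cats1.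
have e2 : hat s = (nseq 1 At ++ map (@Ch S) s) ++ nseq 1 Dol by rewrite e1 catA.
rewrite fa_step //.
have -> : lead_run (hat s) = 1.
  by rewrite e1 lead_nseq //; case: (s) sn.
have -> : trail_run (hat s) = 1.
  rewrite e2 trail_nseq //= rev_cons -cats1 -map_rev.
  by case: (rev s).
have hs : size (hat s) = (size s).+2 by rewrite /hat /= size_rcons size_map.
rewrite hs /= subn1 /=.
have s0 : 0 < size s by rewrite lt0n size_eq0.
rewrite ltnNge s0 /= take0 drop0 -cats1 drop_size_cat ?size_map //.
by rewrite take_size_cat ?size_map.
Qed.

End Tr.

Theorem theorem6p9 (S : eqType) (k : nat) (sig : nat -> seq S) (p : nat -> nat) :
  2 <= k ->
  (forall d, 1 <= d <= k.-1 -> sig d != [::]) ->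
  let T := ([:: At; Dol], 1) :: [seq (map Ch (sig d), p d) | d <- iota 1 k.-1] in
  let cond :=
    (* (1) *)
    (forall d, 1 <= d <= k - 2 ->
       [/\ 1 <= p d, 1 <= size (sig d) - p d,
           run_of (ofirst (sig d)) (take (p d) (sig d))
         & run_of (olast (sig d)) (drop (p d) (sig d))]) /\
    (* (2) *)
    (p k.-1 = 0 /\
     ((exists a : S, run_of (Some a) (sig k.-1)) \/
      (exists (a c : S) (l b : nat), [/\ 1 <= l, 1 <= b, a != c
                                     & sig k.-1 = nseq l a ++ nseq b c]))) /\
    (* (3) *)
    (3 <= k ->
       (forall d, 1 <= d <= k - 3 ->
          ofirst (sig d.+1) != ofirst (sig d) /\ olast (sig d.+1) != olast (sig d)) /\
       ofirst (sig k.-1) != ofirst (sig (k - 2)) /\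
       olast (sig k.-1) != olast (sig (k - 2))) in
  ((exists s : seq S, T = flashback s) <-> cond) /\
  (cond -> exists s : seq S, flashback_inv T = map Ch s /\ flashback s = T).
Proof.
case: k => [|[|k]] // _ hne; cbv zeta.
have -> : k.+2.-1 = k.+1 by [].
have -> : k.+2 - 2 = k by lia.
have -> : k.+2 - 3 = k.-1 by lia.
set V := [seq (map Ch (sig d), p d) | d <- iota 1 k.+1].
match goal with |- ((_ <-> ?C) /\ _) => have key : C <-> validR V end.
  rewrite /V (validR_iota (fun d => (map Ch (sig d), p d)) 1 k) add1n.
  split.
    move=> [c1 [c2 c3]]; split; last by apply/end_tr.
    move=> d /andP [d1 dk].
    have hd : sig d != [::] by apply: hne; lia.
    split; first by apply/(mid_tr _ hd); apply: c1; lia.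
    - rewrite (neq_tr _ _).1.
      have k1 : 3 <= k.+2 by lia.
      have [c3a [c3b c3c]] := c3 k1.
      case: (ltngtP d k) => [dlt|dgt|->] //; last by lia.
      by apply: (c3a d _).1; lia.
    - rewrite (neq_tr _ _).2.
      have k1 : 3 <= k.+2 by lia.
      have [c3a [c3b c3c]] := c3 k1.
      case: (ltngtP d k) => [dlt|dgt|->] //; last by lia.
      by apply: (c3a d _).2; lia.
  move=> [h1 h2]; split.
    move=> d dk; have hd : sig d != [::] by apply: hne; lia.
    have hd' : 1 <= d < 1 + k by lia.
    by apply/(mid_tr _ hd); have [] := h1 d hd'.
  split; first by apply/end_tr.
  move=> k3; split.
    move=> d dk; have hd' : 1 <= d < 1 + k by lia.
    have [_ e1 e2] := h1 d hd'.
    by rewrite -(neq_tr _ _).1 -(neq_tr _ _).2.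
  have hd' : 1 <= k < 1 + k by lia.
  have [_ e1 e2] := h1 k hd'.
  by rewrite -(neq_tr _ _).1 -(neq_tr _ _).2.
have mk : forall s, s != [::] -> size (map (@Ch S) s) < size (hat s).
  by move=> s _; rewrite /hat /= size_rcons size_map.
have build : validR V -> exists s, [/\ s != [::], NN V = map Ch s & flashback s = ([:: At; Dol], 1) :: V].
  move=> hv.
  exists (NN [seq (sig d, p d) | d <- iota 1 k.+1]).
  have hN : NN V = map Ch (NN [seq (sig d, p d) | d <- iota 1 k.+1]) by rewrite /V NN_map.
  have sn : NN [seq (sig d, p d) | d <- iota 1 k.+1] != [::].
    move: hv; rewrite /V [iota _ _]/= [map _ _]/= => hv.
    have [_ _ nn _] := headNN hv.
    by move: nn; rewrite -/V hN; case: (NN _).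
  split => //.
  by rewrite /flashback hat_step // -hN coreB // hN mk.
split; [split|].
- move=> [s hs].
  case: (eqVneq s [::]) => [s0|sn].
    by move: hs; rewrite s0.
  move: hs; rewrite /flashback hat_step // => -[hV].
  apply/key; rewrite hV.
  by have [] := coreA (f := size (hat s)) (w := map Ch s) _ (mk _ sn); first by case: (s) sn.
- move/key/build => [s [_ _ hs]]; by exists s.
- move/key/build => [s [sn hN hs]]; exists s; split => //.
  rewrite /flashback_inv /strip.
  have -> : flashback_N (([:: At; Dol], 1) :: V) = At :: (map Ch s ++ [:: Dol]).
    by rewrite -hN.
  rewrite /= drop0 size_cat size_map /= addn1 subSS subn1 /=.
  by rewrite take_size_cat ?size_map.
Qed.
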